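(* Let $k$ be a commutative ring and $P$ an invertible $k$-module. Every $P$-Frobenius $k$-algebra $A$ is a QF algebra in the sense of Müller.
   Context: $P$ invertible means finitely generated projective of constant rank one. $A$ is $P$-Frobenius if it is finitely generated projective over $k$ and $A_A\cong\mathrm{Hom}_k(A,P)_A$ as right $A$-modules, where $(fa)(x)=f(ax)$. $A$ is QF in Müller's sense if it is finitely generated projective over $k$ and $A_A$ is isomorphic to a direct summand of a direct sum of $n$ copies of $A^*_A=\mathrm{Hom}_k(A,k)_A$ for some $n\ge1$. *)

(* Defs.v *)
From HB Require Import structures.
From mathcomp Require Import all_boot all_order all_algebra.
Set Implicit Arguments. Unset Strict Implicit. Unset Printing Implicit Defensive.
Import GRing.Theory.
Local Open Scope ring_scope.

Definition fgproj (k : comPzRingType) (M : lmodType k) : Prop :=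
  exists n (f : M -> 'rV[k]_n) (g : 'rV[k]_n -> M),
    linear f /\ linear g /\ cancel f g.

(* Rank of a f.g. projective module at a point of Spec k: for a presentation
   M = image of the idempotent E = f o g on k^n, the rank at a ring morphism
   phi : k -> F into a field is the rank of the matrix phi(E) over F.
   M is invertible iff it is f.g. projective of constant rank one, i.e. this
   rank is 1 for every ring morphism from k to a field. *)
Definition invertible_mod (k : comPzRingType) (M : lmodType k) : Prop :=
  exists n (f : M -> 'rV[k]_n) (g : 'rV[k]_n -> M),
    [/\ linear f, linear g, cancel f g &
      forall (F : fieldType) (phi : {rmorphism k -> F}),
        \rank (map_mx phi (lin1_mx (f \o g))) = 1%N].

(* A is P-Frobenius: A f.g. projective over k and A_A ~= Hom_k(A,P)_A as right
   A-modules, where (h a)(x) = h (a x).  Elements of Hom_k(A,P) are represented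
   as k-linear functions A -> P, compared pointwise. *)
Definition P_Frobenius (k : comPzRingType) (P : lmodType k) (A : algType k)
  : Prop :=
  fgproj A /\
  exists Phi : A -> A -> P,
    [/\ (forall a, linear (Phi a)),
        (forall a b x, Phi (a + b) x = Phi a x + Phi b x),
        (forall a b x, Phi (a * b) x = Phi a (b * x)),
        (forall a b, (forall x, Phi a x = Phi b x) -> a = b) &
        (forall h : A -> P, linear h -> exists a, forall x, Phi a x = h x)].

(* Elements of (A^dual)^n, A^dual = Hom_k(A,k): n-tuples of k-linear maps A -> k. *)
Definition dual_tuple (k : comPzRingType) (A : algType k) n
  (u : 'I_n -> A -> k) : Prop := forall j, linear (u j : A -> k^o).

(* A is QF in Mueller's sense: A f.g. projective over k and A_A is isomorphic
   to a direct summand of (A^dual)^n as right A-modules for some n >= 1, i.e.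
   there are right A-linear maps i : A -> (A^dual)^n, p : (A^dual)^n -> A with
   p o i = id. *)
Definition QF_Muller (k : comPzRingType) (A : algType k) : Prop :=
  fgproj A /\
  exists n : nat, (0 < n)%N /\
  exists (i : A -> 'I_n -> A -> k) (p : ('I_n -> A -> k) -> A),
    [/\ (forall a, dual_tuple (i a)) /\
        (forall a b j x, i (a + b) j x = i a j x + i b j x),
        (forall a b j x, i (a * b) j x = i a j (b * x)),
        (forall u v w, dual_tuple u -> dual_tuple v -> dual_tuple w ->
           (forall j x, w j x = u j x + v j x) -> p w = p u + p v),
        (forall u w b, dual_tuple u -> dual_tuple w ->
           (forall j x, w j x = u j (b * x)) -> p w = p u * b) &
        (forall a, p (i a) = a)].

(* Main.v *)
Require Import Defs.
From HB Require Import structures.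
From mathcomp Require Import all_boot all_order all_algebra.
From Stdlib Require Import ClassicalEpsilon.
Import GRing.Theory.
Set Implicit Arguments.
Local Open Scope ring_scope.

Section Lin.
Variables (k : comPzRingType) (U V : lmodType k) (f : U -> V).
Hypothesis lf : linear f.
Lemma linD x y : f (x + y) = f x + f y.
Proof. by rewrite -[x in LHS]scale1r lf scale1r. Qed.
Lemma lin0 : f 0 = 0.
Proof. have h := linD 0 0; rewrite addr0 in h. by apply: (addrI (f 0)); rewrite -h addr0. Qed.
Lemma linZ a x : f (a *: x) = a *: f x.
Proof. by rewrite -[a *: x]addr0 lf lin0 addr0. Qed.
End Lin.

Theorem proposition2p3 (k : comPzRingType) (P : lmodType k) (A : algType k) :
  invertible_mod P -> P_Frobenius P A -> QF_Muller A.
Proof.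
move=> [m [f [g [lf lg fK _]]]] [fgA [Phi [lPhi PhiD PhiM Phiinj Phisurj]]].
split=> //.
exists (m + 1)%N; split; first by rewrite addn1.
pose coll (w : 'I_(m + 1) -> A -> k) (x : A) : 'rV[k]_m := \row_l w (lshift 1 l) x.
pose p w := epsilon (inhabits (0 : A)) (fun a => forall x, Phi a x = g (coll w x)).
have pP : forall w, dual_tuple w -> forall x, Phi (p w) x = g (coll w x).
  move=> w dw; apply: (epsilon_spec (inhabits (0 : A))
     (fun a => forall x, Phi a x = g (coll w x))).
  apply: Phisurj => c x y.
  have -> : coll w (c *: x + y) = c *: coll w x + coll w y.
    by apply/rowP => l; rewrite !mxE (dw (lshift 1 l)).
  by rewrite lg.
exists (fun a j x => row_mx (f (Phi a x)) (0 : 'rV[k]_1) 0 j), p.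
split.
- split.
  + move=> a j c x y /=.
    rewrite (lPhi a) lf.
    by rewrite !mxE; case: (split j) => l; rewrite !mxE ?mulr0 ?scaler0 ?addr0.
  + move=> a b j x /=.
    by rewrite PhiD (linD lf) !mxE; case: (split j) => l; rewrite !mxE ?addr0.
- by move=> a b j x /=; rewrite PhiM.
- move=> u v w du dv dw H; apply: Phiinj => x.
  rewrite PhiD !pP //.
  have -> : coll w x = coll u x + coll v x by apply/rowP => l; rewrite !mxE H.
  by rewrite (linD lg).
- move=> u w b du dw H; apply: Phiinj => x.
  rewrite PhiM !pP //.
  by congr g; apply/rowP => l; rewrite !mxE H.
- move=> a; apply: Phiinj => x.
  have di : dual_tuple (fun j x => row_mx (f (Phi a x)) (0 : 'rV[k]_1) 0 j).
    move=> j c y z /=.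
    rewrite (lPhi a) lf.
    by rewrite !mxE; case: (split j) => l; rewrite !mxE ?mulr0 ?scaler0 ?addr0.
  rewrite pP // /coll -[RHS]fK; congr g.
  by apply/rowP => l; rewrite mxE row_mxEl.
Qed.
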